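(* Let $(A,\cdot)$ be a commutative $\mathbb{Q}$-algebra and, for each $m\in\mathbb{N}$, let $w\mapsto f_w(m)$ be a $\mathbb{Q}$-algebra homomorphism $(\mathfrak{H}^1_z,\ast)\to(A,\cdot)$. For a nonempty word $w\in\mathfrak{H}^1_z$ and $M\in\mathbb{N}$ define \[ F_w(M):=\sum_{\substack{1\le k\le l(w)\\ w_1\cdots w_k=w}}\ \sum_{0<m_1<\dots<m_k<M}f_{w_1}(m_1)\cdots f_{w_k}(m_k)\in A, \] where $l(w)$ is the length of $w$ and the inner sum is over all decompositions of $w$ as a concatenation of $k$ nonempty words $w_1,\dots,w_k$; set $F_{\emptyset}(M)=1$ and extend linearly. Then for every $M\in\mathbb{N}$ the map $w\mapsto F_w(M)$ is an algebra homomorphism $(\mathfrak{H}^1_z,\ast)\to(A,\cdot)$; in particular $F_{u\ast v}(M)=F_u(M)F_v(M)$ for all $u,v\in\mathfrak{H}^1_z$.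
   Context: $\mathfrak{H}^1_z=\mathbb{Q}\langle z_1,z_2,\dots\rangle$ is the noncommutative polynomial algebra on letters $z_j$ ($j\in\mathbb{N}$), i.e. the $\mathbb{Q}$-span of words in these letters, equipped with the stuffle product $\ast$ defined bilinearly by $1\ast w=w\ast1=w$ and $z_aw\ast z_bv=z_a(w\ast z_bv)+z_b(z_aw\ast v)+z_{a+b}(w\ast v)$ for $a,b\in\mathbb{N}$ and words $w,v$; this is a commutative $\mathbb{Q}$-algebra. Algebra homomorphisms send the empty word to $1$. *)

(* Defs.v *)
From HB Require Import structures.
From mathcomp Require Import all_boot all_order all_algebra.
Set Implicit Arguments. Unset Strict Implicit. Unset Printing Implicit Defensive.
Import Order.TTheory GRing.Theory Num.Theory.
Local Open Scope ring_scope.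

(* Letters: the natural number [a] encodes the letter z_(a+1); thus the
   letters z_1, z_2, ... of H^1_z are exactly the encodings 0, 1, 2, ... *)
Definition word := seq nat.

(* Sum of letters: z_(a+1) "+" z_(b+1) = z_(a+b+2), encoded by a+b+1. *)
Definition letter_add (a b : nat) : nat := (a + b).+1.

(* Stuffle product of two words, as a formal sum of words listed with
   multiplicity (all coefficients of u * v on words are natural numbers):
   z_a u * z_b v = z_a (u * z_b v) + z_b (z_a u * v) + z_(a+b) (u * v). *)
Fixpoint stuffle (u v : word) {struct u} : seq word :=
  match u with
  | [::] => [:: v]
  | a :: u' =>
    let fix st (v : word) : seq word :=
      match v with
      | [::] => [:: u]
      | b :: v' =>
          map (cons a) (stuffle u' v) ++ map (cons b) (st v')
          ++ map (cons (letter_add a b)) (stuffle u' v')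
      end in st v
  end.

(* Elements of H^1_z are represented as formal Q-linear combinations of
   words: [:: (c1, w1); ...; (cn, wn)] stands for c1 w1 + ... + cn wn. *)
Definition Hz := seq (rat * word).

Definition stuffleH (x y : Hz) : Hz :=
  flatten [seq [seq (p.1 * q.1, w) | w <- stuffle p.2 q.2] | p <- x, q <- y].

Definition linext (A : lalgType rat) (phi : word -> A) (x : Hz) : A :=
  \sum_(p <- x) p.1 *: phi p.2.

Definition stuffle_alg_hom (A : lalgType rat) (phi : word -> A) : Prop :=
  linext phi [:: (1, [::])] = 1 /\
  forall x y : Hz, linext phi (stuffleH x y) = linext phi x * linext phi y.

(* All decompositions of a word w as a concatenation w = w_1 ... w_k of
   k >= 0 nonempty words (k = 0 only for the empty word). *)
Fixpoint decomps (w : word) : seq (seq word) :=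
  match w with
  | [::] => [:: [::]]
  | a :: w' =>
      [seq [:: a] :: d | d <- decomps w'] ++
      [seq (a :: head [::] d) :: behead d | d <- decomps w' & d != [::]]
  end.

(* For d = [:: w_1; ...; w_k]:
   nested_sum f d lo M = \sum_(lo < m_1 < ... < m_k < M) f m_1 w_1 ... f m_k w_k. *)
Fixpoint nested_sum (A : lalgType rat) (f : nat -> word -> A) (d : seq word)
    (lo M : nat) : A :=
  match d with
  | [::] => 1
  | u :: d' => \sum_(lo.+1 <= m < M) f m u * nested_sum f d' m M
  end.

Definition Fsum (A : lalgType rat) (f : nat -> word -> A) (M : nat) (w : word) : A :=
  match w with
  | [::] => 1
  | _ => \sum_(d <- decomps w) nested_sum f d 0 M
  end.

(* Main.v *)
Set Warnings "-notation-overridden,-ambiguous-paths".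
Require Import Defs.
From HB Require Import structures.
From mathcomp Require Import all_boot all_order all_algebra zify.
Import GRing.Theory.
Local Open Scope ring_scope.
Set Implicit Arguments. Unset Strict Implicit.

Lemma stuffle_cons a u b v : stuffle (a::u) (b::v) = map (cons a) (stuffle u (b::v)) ++ map (cons b) (stuffle (a::u) v) ++ map (cons (letter_add a b)) (stuffle u v).
Proof. by []. Qed.
Lemma stuffle_nil_l v : stuffle [::] v = [:: v]. Proof. by []. Qed.
Lemma stuffle_nil_r u : stuffle u [::] = [:: u]. Proof. by case: u. Qed.

Arguments stuffle : simpl never.
Section Deconc.
Variable V : nmodType.

Definition sp (F : word -> word -> V) (w : word) :=
  \sum_(i < (size w).+1) F (take i w) (drop i w).

Lemma sp_cons F c w : sp F (c :: w) = F [::] (c::w) + sp (fun x y => F (c::x) y) w.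
Proof. by rewrite /sp big_ord_recl. Qed.

Lemma perm6 (x1 x2 x3 y1 y2 y3 : V) : (x1 + y1) + ((x2+y2)+(x3+y3)) = (x1+(x2+x3)) + (y1+(y2+y3)).
Proof. by rewrite [(x2 + y2) + _]addrACA addrACA. Qed.

Lemma split_inner n m (G : nat -> nat -> V) : \sum_(i < n) \sum_(j < m.+1) G i j =
  \sum_(i < n) G i 0%N + \sum_(i < n) \sum_(j < m) G i j.+1.
Proof. by rewrite -big_split; apply: eq_bigr => i _; rewrite big_ord_recl. Qed.

Lemma split_outer n m (G : nat -> nat -> V) : \sum_(i < n.+1) \sum_(j < m) G i j =
  \sum_(j < m) G 0%N j + \sum_(i < n) \sum_(j < m) G i.+1 j.
Proof. by rewrite big_ord_recl. Qed.

Lemma ac7 (t p1 x1 p2 x2 x3 : V) : t + (p1 + x1 + (p2 + x2 + x3)) = t + p2 + (p1 + (x1 + x2 + x3)).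
Proof. by rewrite -!addrA [x1 + (p2 + _)]addrCA [p1 + (p2 + _)]addrCA. Qed.

Lemma sum_sp_cons F c (s : seq word) : \sum_(w <- s) sp F (c :: w) =
  \sum_(w <- s) F [::] (c::w) + \sum_(w <- s) sp (fun x y => F (c::x) y) w.
Proof. by rewrite -big_split; apply: eq_bigr => w _; rewrite sp_cons. Qed.

Lemma deconc u v (F : word -> word -> V) :
  \sum_(w <- stuffle u v) sp F w =
  \sum_(i < (size u).+1) \sum_(j < (size v).+1)
     \sum_(x <- stuffle (take i u) (take j v))
     \sum_(y <- stuffle (drop i u) (drop j v)) F x y.
Proof.
elim: u v F => [|a u IHu] v F.
  rewrite stuffle_nil_l big_seq1 big_ord_recl big_ord0 addr0 /sp.
  by apply: eq_bigr => j _; rewrite stuffle_nil_l big_seq1 /= big_seq1.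
elim: v F => [|b v IHv] F.
  rewrite stuffle_nil_r big_seq1 /sp; apply: eq_bigr => i _.
  by rewrite big_ord_recl big_ord0 addr0 /= !stuffle_nil_r !big_seq1.
set Fa := fun x y => F (a :: x) y.
set Fb := fun x y => F (b :: x) y.
set Fab := fun x y => F (letter_add a b :: x) y.
have -> : \sum_(w <- stuffle (a::u) (b::v)) sp F w = \sum_(w <- stuffle (a::u) (b::v)) F [::] w +
  (\sum_(w <- stuffle u (b::v)) sp Fa w + (\sum_(w <- stuffle (a::u) v) sp Fb w + \sum_(w <- stuffle u v) sp Fab w)).
  rewrite !stuffle_cons !big_cat !big_map.
  rewrite !sum_sp_cons -/Fa -/Fb -/Fab.
  by apply: perm6.
rewrite IHu IHv IHu.
rewrite /=.
rewrite (split_inner _ _ (fun i j => \sum_(x <- stuffle (take i u) (take j (b :: v)))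
            \sum_(y <- stuffle (drop i u) (drop j (b :: v))) Fa x y)).
rewrite (split_outer _ _ (fun i j => \sum_(x <- stuffle (take i (a::u)) (take j v))
            \sum_(y <- stuffle (drop i (a::u)) (drop j v)) Fb x y)).
rewrite (split_outer _ _ (fun i j => \sum_(x <- stuffle (take i (a::u)) (take j (b::v)))
            \sum_(y <- stuffle (drop i (a::u)) (drop j (b::v))) F x y)).
rewrite (split_inner _ _ (fun i j => \sum_(x <- stuffle (take i.+1 (a::u)) (take j (b::v)))
            \sum_(y <- stuffle (drop i.+1 (a::u)) (drop j (b::v))) F x y)).
rewrite (big_ord_recl (size v).+1) /=.
rewrite stuffle_nil_l big_seq1.
have EP1 : \sum_(i < (size u).+1) \sum_(x <- stuffle (take i u) [::]) \sum_(y <- stuffle (drop i u) (b :: v)) Fa x y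
  = \sum_(i < (size u).+1) \sum_(y <- stuffle (drop i u) (b :: v)) Fa (take i u) y.
  by apply: eq_bigr => i _; rewrite stuffle_nil_r big_seq1.
have EP1' : \sum_(i < (size u).+1) \sum_(x <- stuffle (a :: take i u) [::]) \sum_(y <- stuffle (drop i u) (b :: v)) F x y
  = \sum_(i < (size u).+1) \sum_(y <- stuffle (drop i u) (b :: v)) Fa (take i u) y.
  by apply: eq_bigr => i _; rewrite stuffle_nil_r big_seq1.
have EP2 : \sum_(j < (size v).+1) \sum_(x <- stuffle [::] (take j v)) \sum_(y <- stuffle (a :: u) (drop j v)) Fb x y
  = \sum_(j < (size v).+1) \sum_(y <- stuffle (a :: u) (drop j v)) Fb (take j v) y.
  by apply: eq_bigr => i _; rewrite stuffle_nil_l big_seq1.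
have EP2' : \sum_(j < (size v).+1) \sum_(x <- stuffle [::] (b :: take (0 + j) v)) \sum_(y <- stuffle (a :: u) (drop (0 + j) v)) F x y
  = \sum_(j < (size v).+1) \sum_(y <- stuffle (a :: u) (drop j v)) Fb (take j v) y.
  by apply: eq_bigr => i _; rewrite stuffle_nil_l big_seq1.
have EX : \sum_(i < (size u).+1) \sum_(j < (size v).+1) \sum_(x <- stuffle (a :: take i u) (b :: take j v))
            \sum_(y <- stuffle (drop i u) (drop j v)) F x y =
  \sum_(i < (size u).+1) \sum_(j < (size v).+1) \sum_(x <- stuffle (take i u) (b :: take j v))
            \sum_(y <- stuffle (drop i u) (drop j v)) Fa x y +
  \sum_(i < (size u).+1) \sum_(j < (size v).+1) \sum_(x <- stuffle (a :: take i u) (take j v))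
             \sum_(y <- stuffle (drop i u) (drop j v)) Fb x y +
  \sum_(i < (size u).+1) \sum_(j < (size v).+1) \sum_(x <- stuffle (take i u) (take j v))
             \sum_(y <- stuffle (drop i u) (drop j v)) Fab x y.
  rewrite -!big_split; apply: eq_bigr => i _; rewrite -!big_split; apply: eq_bigr => j _.
  by rewrite stuffle_cons !big_cat !big_map; exact: addrA.
rewrite EP1 EP1' EP2 EP2' EX.
by apply: ac7.
Qed.
End Deconc.

Section Main.
Variable A : comAlgType rat.

Definition wchar (phi : word -> A) := phi [::] = 1 /\
  forall u v, \sum_(w <- stuffle u v) phi w = phi u * phi v.

Definition conv (phi psi : word -> A) (w : word) : A := sp (fun x y => phi x * psi y) w.

Lemma conv_char phi psi : wchar phi -> wchar psi -> wchar (conv phi psi).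
Proof.
move=> [p0 pm] [q0 qm]; split.
  by rewrite /conv /sp big_ord_recl big_ord0 addr0 /= p0 q0 mulr1.
move=> u v; rewrite /conv deconc /sp big_distrl /=.
apply: eq_bigr => i _; rewrite big_distrr /=; apply: eq_bigr => j _.
under eq_bigr do rewrite -big_distrr /=.
by rewrite -big_distrl /= pm qm mulrACA.
Qed.

Lemma linext_stuffleH (phi : word -> A) x y : linext phi (stuffleH x y) =
  \sum_(p <- x) \sum_(q <- y) (p.1 * q.1) *: \sum_(w <- stuffle p.2 q.2) phi w.
Proof.
rewrite /linext /stuffleH big_flatten big_allpairs_dep /=.
apply: eq_bigr => p _; apply: eq_bigr => q _.
by rewrite big_map scaler_sumr.
Qed.

Lemma hom_iff phi : stuffle_alg_hom phi <-> wchar phi.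
Proof.
have E1 : linext phi [:: (1, [::])] = phi [::] by rewrite /linext big_seq1 scale1r.
split.
  move=> [h1 hm]; split; first by rewrite -E1.
  move=> u v; have := hm [:: (1, u)] [:: (1, v)].
  by rewrite linext_stuffleH /linext !big_seq1 /= mulr1 !scale1r.
move=> [h1 hm]; split; first by rewrite E1.
move=> x y; rewrite linext_stuffleH /linext big_distrl /=.
apply: eq_bigr => p _; rewrite big_distrr /=; apply: eq_bigr => q _.
by rewrite hm -scalerAl -scalerAr scalerA.
Qed.

Lemma eps_char : wchar (fun w => (w == [::])%:R).
Proof.
split=> // u v; case: u => [|a u]; first by rewrite stuffle_nil_l big_seq1 mul1r.
case: v => [|b v]; first by rewrite stuffle_nil_r big_seq1 mulr1.
rewrite stuffle_cons !big_cat !big_map /= mul0r.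
by rewrite !big1 ?addr0.
Qed.

Lemma decomp_sum (H : word -> seq word -> A) w :
  \sum_(d <- decomps w) (if d is u :: d' then H u d' else 0) =
  \sum_(i < size w) \sum_(d <- decomps (drop i.+1 w)) H (take i.+1 w) d.
Proof.
elim: w H => [|a w IH] H; first by rewrite big_seq1 big_ord0.
rewrite /= big_cat !big_map big_ord_recl /= drop0 take0; congr (_ + _).
rewrite big_filter big_mkcond /= -(IH (fun u d => H (a :: u) d)).
by apply: eq_bigr => -[|u d] _.
Qed.

Variable f : nat -> word -> A.
Variable M : nat.

Definition G lo w := \sum_(d <- decomps w) nested_sum f d lo M.

Lemma nested_step d lo : (lo.+1 < M)%N -> nested_sum f d lo M =
  nested_sum f d lo.+1 M + (if d is u :: d' then f lo.+1 u * nested_sum f d' lo.+1 M else 0).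
Proof.
move=> lt; case: d => [|u d] /=; first by rewrite addr0.
by rewrite (big_ltn lt) addrC.
Qed.

Lemma G_step lo w : (lo.+1 < M)%N -> f lo.+1 [::] = 1 -> G lo w = conv (f lo.+1) (G lo.+1) w.
Proof.
move=> lt f0; rewrite /G.
under eq_bigr do rewrite (nested_step _ lt).
rewrite big_split /= decomp_sum /conv /sp big_ord_recl /= take0 drop0 f0 mul1r.
congr (_ + _); apply: eq_bigr => i _; by rewrite mulr_sumr.
Qed.

Lemma G_base lo w : (M <= lo.+1)%N -> G lo w = (w == [::])%:R.
Proof.
move=> le; case: w => [|a w]; first by rewrite /G big_seq1.
rewrite /G /= big_cat !big_map /= !big1 ?addr0 // => d _; by rewrite big_geq.
Qed.

Lemma wchar_ext phi psi : phi =1 psi -> wchar phi -> wchar psi.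
Proof.
move=> E [h0 hm]; split; first by rewrite -E.
by move=> u v; rewrite -!E -hm; apply: eq_bigr => w _; rewrite E.
Qed.

Lemma G_char : (forall m, (0 < m)%N -> wchar (f m)) -> forall lo, wchar (G lo).
Proof.
move=> hf.
suff H : forall k lo, (M - lo <= k)%N -> wchar (G lo) by move=> lo; exact: (H _ lo (leqnn _)).
elim=> [|k IH] lo hk.
  have le : (M <= lo.+1)%N by lia.
  by apply: (wchar_ext _ eps_char) => w; rewrite G_base.
case: (leqP M lo.+1) => [le|lt].
  by apply: (wchar_ext _ eps_char) => w; rewrite G_base.
have [f0 _] := hf lo.+1 isT.
apply: (wchar_ext _ (conv_char (hf lo.+1 isT) (IH lo.+1 _))); last by lia.
by move=> w; rewrite G_step.
Qed.
End Main.

Theorem proposition6p8 (A : comAlgType rat) (f : nat -> word -> A) :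
  (forall m : nat, (0 < m)%N -> stuffle_alg_hom (f m)) ->
  forall M : nat, stuffle_alg_hom (Fsum f M).
Proof.
move=> hf M; apply/hom_iff.
have hf' : forall m, (0 < m)%N -> wchar (f m) by move=> m /hf /hom_iff.
apply: (wchar_ext _ (G_char M hf' 0)) => w.
by case: w => [|a w]; rewrite /G /Fsum //= big_seq1.
Qed.
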